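(* Let $v=[v_1,\ldots,v_N]^\top$ be a random vector with probability density $q(v)$ and marginal densities $q_i(v_i)$, $i=1,\ldots,N$, and let $w_i\geq 0$ for $i=1,\ldots,N$. Then, for any non-negative valued function $\Psi$, \[ \int \log\Bigl(\sum_{i=1}^{N} w_i \Psi(v_i)\Bigr)\, q(v)\,dv \;\geq\; \log\Bigl(\sum_{i=1}^{N} w_i e^{\xi_i}\Bigr), \qquad\text{where}\qquad \xi_i := \int \log \Psi(v_i)\, q_i(v_i)\, dv_i . \] *)

(* Defs.v *)
From HB Require Import structures.
From mathcomp Require Import all_boot all_order all_algebra.
From mathcomp Require Import all_classical all_reals all_analysis.
Set Implicit Arguments. Unset Strict Implicit. Unset Printing Implicit Defensive.
Import Order.TTheory GRing.Theory Num.Theory.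
Local Open Scope classical_set_scope.
Local Open Scope ring_scope.
Local Open Scope ereal_scope.

(* For non-negative measurable f this is the integral of f against
   n-dimensional Lebesgue measure (Tonelli). *)
Fixpoint iter_leb (R : realType) (n : nat) : (n.-tuple R -> \bar R) -> \bar R :=
  match n return (n.-tuple R -> \bar R) -> \bar R with
  | 0 => fun f => f [tuple]
  | n'.+1 => fun f =>
      \int[@lebesgue_measure R]_x iter_leb (fun t : n'.-tuple R => f (cons_tuple x t))
  end.

Definition has_joint_density (R : realType) (n : nat)
    (P : probability (n.-tuple R) R) (q : n.-tuple R -> R) : Prop :=
  measurable_fun setT q /\ (forall v, (0 <= q v)%R) /\
  forall A : set (n.-tuple R), measurable A ->
    P A = iter_leb (fun v => ((\1_A v)%R * q v)%:E).

Definition has_marginal_density (R : realType) (n : nat)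
    (P : probability (n.-tuple R) R) (i : 'I_n) (qi : R -> R) : Prop :=
  measurable_fun setT qi /\ (forall x, (0 <= qi x)%R) /\
  forall A : set R, measurable A ->
    P ((fun v : n.-tuple R => tnth v i) @^-1` A) =
    \int[@lebesgue_measure R]_(x in A) (qi x)%:E.

(* xi_i := \int log Psi(v_i) q_i(v_i) dv_i  (extended-real log, log 0 = -oo) *)
Definition xi (R : realType) (qi : R -> R) (Psi : R -> R) : \bar R :=
  \int[@lebesgue_measure R]_x (lne (Psi x)%:E * (qi x)%:E).

(* Main.v *)
Require Import Defs.
From HB Require Import structures.
From mathcomp Require Import all_boot all_order all_algebra.
From mathcomp Require Import all_classical all_reals all_analysis.
From mathcomp Require Import measurable_realfun.
From mathcomp Require Import ring lra.
Import Order.TTheory GRing.Theory Num.Theory.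
Local Open Scope classical_set_scope.
Local Open Scope ring_scope.

Lemma ln_le_subr1 {R : realType} (t : R) : 0 < t -> ln t <= t - 1.
Proof.
move=> t0; have := @le_ln1Dx R (t - 1).
have -> : 1 + (t - 1) = t by ring.
by apply; lra.
Qed.

Lemma key_real (R : realType) (I : finType) (s w psi c : I -> R) (S Y : R) :
  S = \sum_i s i -> 0 < S -> (forall i, 0 <= s i) ->
  (forall i, 0 < s i -> s i = w i * expR (c i) /\ 0 < psi i) ->
  (forall i, 0 <= w i) -> (forall i, 0 <= psi i) ->
  Y = \sum_i w i * psi i -> 0 < Y ->
  ln S + \sum_i (s i / S) * (ln (psi i) - c i) <= ln Y.
Proof.
move=> SE S0 s0 hs w0 psi0 YE Y0.
have term i : (s i / S) * (ln (psi i) - c i + (ln S - ln Y))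
    <= w i * psi i / Y - s i / S.
  have [si0|sipos] := eqVneq (s i) 0.
    rewrite si0 !mul0r subr0; apply: divr_ge0; [exact: mulr_ge0|exact: ltW].
  have sp : 0 < s i by rewrite lt_neqAle eq_sym sipos s0.
  have [sE pp] := hs i sp.
  set t := psi i * expR (- c i) * S / Y.
  have tp : 0 < t.
    apply: divr_gt0 => //; apply: mulr_gt0 => //; apply: mulr_gt0 => //; exact: expR_gt0.
  have lnt : ln t = ln (psi i) - c i + (ln S - ln Y).
    have e1 : 0 < expR (- c i) by exact: expR_gt0.
    rewrite /t lnM ?posrE; last 2 first.
    - by apply: mulr_gt0 => //; apply: mulr_gt0.
    - by rewrite invr_gt0.
    rewrite lnM ?posrE; last 2 first.
    - by apply: mulr_gt0.
    - by [].
    rewrite lnM ?posrE // expRK lnV ?posrE //; ring.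
  rewrite -lnt.
  have h1 := @ln_le_subr1 R t tp.
  have sS : 0 <= s i / S by rewrite divr_ge0 // ltW.
  apply: le_trans (ler_wpM2l sS h1) _.
  rewrite /t sE.
  have e1 : expR (c i) * expR (- c i) = 1 by rewrite -expRD subrr expR0.
  have Sn : S != 0 by rewrite gt_eqF.
  have Yn : Y != 0 by rewrite gt_eqF.
  rewrite le_eqVlt; apply/orP; left; apply/eqP.
  have en : expR (c i) != 0 by rewrite gt_eqF // expR_gt0.
  rewrite expRN; field.
  by rewrite Sn Yn en.
have hsum : \sum_i s i / S * (ln (psi i) - c i + (ln S - ln Y)) <= \sum_i (w i * psi i / Y - s i / S) by apply: ler_sum => i _; exact: term.
have Sn : S != 0 by rewrite gt_eqF.
have Yn : Y != 0 by rewrite gt_eqF.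
have e1 : \sum_i s i / S = 1 by rewrite -mulr_suml -SE divff.
have e2 : \sum_i w i * psi i / Y = 1 by rewrite -mulr_suml -YE divff.
rewrite sumrB e1 e2 subrr in hsum.
rewrite (eq_bigr (fun i => s i / S * (ln (psi i) - c i) + s i / S * (ln S - ln Y))) in hsum; last first.
  by move=> i _; rewrite mulrDr.
rewrite big_split /= -mulr_suml e1 mul1r in hsum.
lra.
Qed.

Local Open Scope ereal_scope.

Section density.
Context (R : realType).
Notation RR := (measurableTypeR R).
Context (nu : probability RR R) (q : RR -> R).
Hypothesis mq : measurable_fun setT q.
Hypothesis q0 : forall x, (0 <= q x)%R.
Hypothesis nuq : forall A : set RR, measurable A ->
  nu A = \int[@lebesgue_measure R]_(x in A) (q x)%:E.

Lemma density_integral (g : RR -> \bar R) : measurable_fun setT g ->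
  (forall x, 0 <= g x) ->
  \int[nu]_x g x = \int[@lebesgue_measure R]_x (g x * (q x)%:E).
Proof.
move=> mg g0.
have numu : nu `<< (@lebesgue_measure R).
  move=> N NN A mA AN; rewrite nuq//; apply: null_set_integral => //.
    exact/measurable_EFinP/measurable_funTS.
  exact: NN.
rewrite -(@Radon_Nikodym_SigmaFinite.change_of_variables _ _ _ nu (@lebesgue_measure R) numu g _ g0 measurableT mg).
apply: ae_eq_integral => //.
- apply: emeasurable_funM => //.
  exact: measurable_int (Radon_Nikodym_SigmaFinite.f_integrable numu).
- by apply: emeasurable_funM => //; exact/measurable_EFinP.
- apply: ae_eqe_mul2l; apply: integral_ae_eq => //.
  + exact: Radon_Nikodym_SigmaFinite.f_integrable.
  + exact/measurable_EFinP.
  + move=> E _ mE; rewrite -Radon_Nikodym_SigmaFinite.f_integral//.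
    exact: nuq.
Qed.
End density.

Definition coor (R : realType) n (i : 'I_n) (v : n.-tuple R) : measurableTypeR R := tnth v i.
Lemma measurable_coor (R : realType) n (i : 'I_n) : measurable_fun setT (@coor R n i).
Proof. exact: measurable_tnth. Qed.
HB.instance Definition _ (R : realType) n (i : 'I_n) :=
  isMeasurableFun.Build _ _ _ _ (@coor R n i) (@measurable_coor R n i).

Section marg.
Context (R : realType) (N : nat) (P : probability (N.-tuple R) R) (i : 'I_N) (q : R -> R).
Hypothesis hq : has_marginal_density P i q.

Lemma marg_integral (g : R -> \bar R) : measurable_fun setT g -> (forall x, 0 <= g x) ->
  \int[P]_v g (tnth v i) = \int[@lebesgue_measure R]_x (g x * (q x)%:E).
Proof.
move=> mg g0; case: hq => mq [q0 hA].
have := @density_integral R (distribution P (@coor R N i)) q mq.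
move=> /(_ _ g mg g0) <-.
  by rewrite ge0_integral_distribution.
by move=> A mA; rewrite -hA.
Qed.
End marg.

Lemma le_integral_gen d (T : measurableType d) (R : realType)
  (mu : {measure set T -> \bar R}) (f g : T -> \bar R) :
  measurable_fun setT f -> measurable_fun setT g ->
  (forall x, f x <= g x) -> \int[mu]_x f x <= \int[mu]_x g x.
Proof.
move=> mf mg fg; rewrite (integralE _ _ f) (integralE _ _ g).
apply: leeB.
- apply: ge0_le_integral => //.
  + exact: measurable_funepos.
  + exact: measurable_funepos.
  + by move=> x _; rewrite !funeposE; apply: le_max2 => //.
- apply: ge0_le_integral => //.
  + exact: measurable_funeneg.
  + exact: measurable_funeneg.
  + by move=> x _; rewrite !funenegE; apply: le_max2 => //; rewrite leeN2.
Qed.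

Lemma maxe0E (R : realType) (x : R) : maxe x%:E 0 = (Num.max x 0)%:E.
Proof. by rewrite -EFin_max. Qed.

Lemma shift_parts (R : realType) (a b : \bar R) (c : R) :
  a + c%:E <= b ->
  maxe a 0 <= maxe b 0 + `|c|%:E /\ maxe (- b) 0 <= maxe (- a) 0 + `|c|%:E.
Proof.
have hc1 : (c <= `|c|)%R by exact: ler_norm.
have hc2 : (- c <= `|c|)%R by rewrite -normrN; exact: ler_norm.
have hc0 : (0 <= `|c|)%R by [].
have pinf : maxe (+oo : \bar R) 0 = +oo by apply/max_idPl; exact: leey.
have ninf : maxe (-oo : \bar R) 0 = 0 by apply/max_idPr; exact: leNye.
have g0 (x : R) : 0 <= maxe x%:E 0 + `|c|%:E.
  by apply: adde_ge0; rewrite ?le_max ?lexx ?orbT // lee_fin.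
case: a => [a| |]; case: b => [b| |] //=; rewrite ?lee_fin.
- move=> h; rewrite -?EFinN !maxe0E -!EFinD !lee_fin.
  have hb1 : (b <= Num.max b 0)%R by rewrite le_max lexx.
  have hb2 : (0 <= Num.max b 0)%R by rewrite le_max lexx orbT.
  have ha1 : (- a <= Num.max (- a) 0)%R by rewrite le_max lexx.
  have ha2 : (0 <= Num.max (- a) 0)%R by rewrite le_max lexx orbT.
  by split; rewrite ge_max; apply/andP; split; lra.
all: move=> _; rewrite ?pinf ?ninf ?addye ?leey ?g0; split => //.
all: by rewrite add0e lee_fin.
Qed.

Lemma measurable_lneE (R : realType) : measurable_fun [set: R] (fun r : R => lne r%:E).
Proof.
have -> : (fun r : R => lne r%:E) = (fun r => if (r <= 0)%R then -oo else (ln r)%:E).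
  by apply: funext => r /=.
apply: measurable_fun_ifT.
- by apply: measurable_fun_ler => //; exact: measurable_cst.
- exact: measurable_cst.
- by apply/measurable_EFinP; exact: measurable_ln.
Qed.

Theorem lemma1 (R : realType) (N : nat)
  (P : probability (N.-tuple R) R) (q : N.-tuple R -> R)
  (qm : 'I_N -> R -> R) (w : 'I_N -> R) (Psi : R -> R) :
  has_joint_density P q ->
  (forall i, has_marginal_density P i (qm i)) ->
  (forall i, (0 <= w i)%R) ->
  measurable_fun setT Psi -> (forall x, (0 <= Psi x)%R) ->
  lne (\sum_(i < N) (w i)%:E * expeR (xi (qm i) Psi))
    <= \int[P]_v lne (\sum_(i < N) w i * Psi (tnth v i))%R%:E.
Proof.
move=> _ hm w0 mPsi Psi0.
pose G := fun x : R => lne (Psi x)%:E.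
pose X := fun (i : 'I_N) (v : N.-tuple R) => G (tnth v i).
pose Y := fun v : N.-tuple R => (\sum_(i < N) w i * Psi (tnth v i))%R.
pose L := fun v : N.-tuple R => lne (Y v)%:E.
have mG : measurable_fun setT G.
  exact: (measurableT_comp (measurable_lneE R) mPsi).
have mX i : measurable_fun setT (X i).
  exact: (measurableT_comp mG (measurable_tnth i)).
have mY : measurable_fun setT Y.
  apply: measurable_sum => i; apply: measurable_funM => //.
  exact: (measurableT_comp mPsi (measurable_tnth i)).
have mL : measurable_fun setT L.
  exact: (measurableT_comp (measurable_lneE R) mY).
have xiE i : xi (qm i) Psi = \int[P]_v X i v.
  rewrite /xi integralE (integralE _ _ (X i)).
  have hq := hm i; have q0 := (hq.2.1).
  have -> : (fun x => lne (Psi x)%:E * (qm i x)%:E)^\+ = fun x => G^\+ x * (qm i x)%:E.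
    by apply: funext => x; rewrite !funeposE [RHS]muleC maxe_pMr ?lee_fin // mule0 muleC.
  have -> : (fun x => lne (Psi x)%:E * (qm i x)%:E)^\- = fun x => G^\- x * (qm i x)%:E.
    by apply: funext => x; rewrite !funenegE [RHS]muleC maxe_pMr ?lee_fin // mule0 muleN muleC.
  rewrite -!(@marg_integral R N P i (qm i) hq).
  - congr (_ - _); apply: eq_integral => v _.
    + by rewrite !funeposE.
    + by rewrite !funenegE.
  - exact: measurable_funeneg.
  - by move=> x; rewrite funenegE le_max lexx orbT.
  - exact: measurable_funepos.
  - by move=> x; rewrite funeposE le_max lexx orbT.
have intcst (r : R) : \int[P]_v (cst r%:E) v = r%:E.
  rewrite integral_cst //.
  rewrite -[X in _ = X]mule1; congr (_ * _); exact: probability_setT.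
change (lne (\sum_(i < N) (w i)%:E * expeR (xi (qm i) Psi)) <= \int[P]_v L v).
have [[i [wi xii]]|hno] := pselect (exists i, (0 < w i)%R /\ xi (qm i) Psi = +oo).
  have hab : forall a b : \bar R, 0 <= b -> a - b = +oo -> a = +oo /\ b < +oo.
    case => [a| |]; case => [b| |] //= _ _; split => //; exact: ltry.
  have := xii; rewrite xiE integralE => /hab [].
    by apply: integral_ge0 => v _; rewrite funenegE le_max lexx orbT.
  move=> ha hb.
  pose c := ln (w i).
  have pt v : X i v + c%:E <= L v.
    rewrite /X /G /L.
    have [pz|pp] := leP (Psi (tnth v i)) 0%R.
      by rewrite le0_lneNy ?lee_fin // addNye leNye.
    have Yge : (w i * Psi (tnth v i) <= Y v)%R.
      rewrite /Y (bigD1 i) //= lerDl; apply: sumr_ge0 => j _.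
      exact: mulr_ge0.
    have wpp : (0 < w i * Psi (tnth v i))%R by exact: mulr_gt0.
    rewrite lne_EFin // lne_EFin; last exact: lt_le_trans Yge.
    rewrite -EFinD lee_fin /c addrC -lnM ?posrE //.
    by rewrite ler_ln ?posrE //; exact: lt_le_trans Yge.
  have hp v := @shift_parts R _ _ _ (pt v).
  have Lp : \int[P]_v L^\+ v = +oo.
    have : \int[P]_v (X i)^\+ v <= \int[P]_v (L^\+ v + (cst `|c|%:E) v).
      apply: ge0_le_integral => //.
      - exact: measurable_funepos.
      - apply: emeasurable_funD; first exact: measurable_funepos.
        exact: measurable_cst.
      - by move=> v _; rewrite !funeposE; exact: (hp v).1.
    rewrite ge0_integralD //; first by rewrite ha intcst; case: (\int[P]_v L^\+ v).
    - exact: (measurable_funepos mL).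
    - by move=> v _ /=; rewrite lee_fin.
  have Ln : \int[P]_v L^\- v < +oo.
    have : \int[P]_v L^\- v <= \int[P]_v ((X i)^\- v + (cst `|c|%:E) v).
      apply: ge0_le_integral => //.
      - exact: measurable_funeneg.
      - apply: emeasurable_funD; first exact: measurable_funeneg.
        exact: measurable_cst.
      - by move=> v _; rewrite !funenegE; exact: (hp v).2.
    rewrite ge0_integralD //.
      rewrite intcst => h; apply: le_lt_trans h _.
      by apply: lte_add_pinfty => //; rewrite ltry.
    - exact: (measurable_funeneg (mX i)).
    - by move=> v _ /=; rewrite lee_fin.
  rewrite integralE Lp.
  move: Ln; case: (\int[P]_v L^\- v) => [r _| |] //=.
    by rewrite leey.
  by rewrite leey.
have hs i : exists r : R, (w i)%:E * expeR (xi (qm i) Psi) = r%:E /\ (0 <= r)%R /\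
    ((0 < r)%R -> (0 < w i)%R /\ xi (qm i) Psi = (fine (xi (qm i) Psi))%:E /\
                  r = (w i * expR (fine (xi (qm i) Psi)))%R).
  have [w0i|wpi] := eqVneq (w i) 0%R.
    by exists 0%R; rewrite w0i mul0e; split => //; split => //; rewrite ltxx.
  have wp : (0 < w i)%R by rewrite lt_neqAle eq_sym wpi w0.
  move: hno; case E : (xi (qm i) Psi) => [r| |] hno.
  - exists (w i * expR r)%R; split => //; split; first by rewrite mulr_ge0 ?expR_ge0.
    by move=> _.
  - by exfalso; apply: hno; exists i.
  - by exists 0%R; rewrite /= mule0; split => //; split => //; rewrite ltxx.
pose s := fun i => projT1 (cid (hs i)).
have sE i : (w i)%:E * expeR (xi (qm i) Psi) = (s i)%:E.
  by rewrite /s; case: cid => r [].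
have s0 i : (0 <= s i)%R by rewrite /s; case: cid => r [? []].
have sp i : (0 < s i)%R -> (0 < w i)%R /\ xi (qm i) Psi = (fine (xi (qm i) Psi))%:E /\
                  s i = (w i * expR (fine (xi (qm i) Psi)))%R.
  by rewrite /s; case: cid => r [? []].
under eq_bigr do rewrite sE.
rewrite sumEFin.
pose S := (\sum_(i < N) s i)%R.
have [S0|Spos] := leP S 0%R.
  by rewrite le0_lneNy ?lee_fin // leNye.
rewrite lne_EFin //.
pose c := fun i => fine (xi (qm i) Psi).
pose p := fun i => (s i / S)%R.
have Xint i : (0 < s i)%R -> P.-integrable setT (X i).
  move=> /sp [_ [hx _]].
  have hfin : \int[P]_v X i v \is a fin_num by rewrite -xiE hx.
  rewrite integralE in hfin.
  have a0 : 0 <= \int[P]_v (X i)^\+ v.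
    by apply: integral_ge0 => v _; rewrite funeposE le_max lexx orbT.
  have b0 : 0 <= \int[P]_v (X i)^\- v.
    by apply: integral_ge0 => v _; rewrite funenegE le_max lexx orbT.
  have [ha hb] : \int[P]_v (X i)^\+ v < +oo /\ \int[P]_v (X i)^\- v < +oo.
    move: a0 b0 hfin.
    case: (\int[P]_v (X i)^\+ v) => [a| |]; case: (\int[P]_v (X i)^\- v) => [b| |] //=.
    by move=> _ _ _; split; exact: ltry.
  apply/integrableP; split => //.
  rewrite (_ : (fun v => `|X i v|) = fun v => (X i)^\+ v + (X i)^\- v); last first.
    by apply: funext => v; have := congr1 (fun h => h v) (fune_abse (X i)).
  rewrite ge0_integralD //; first exact: lte_add_pinfty.
  - exact: (measurable_funepos (mX i)).
  - exact: (measurable_funeneg (mX i)).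
pose T := fun i v => (p i)%:E * (X i v - (c i)%:E).
have Tint i : P.-integrable setT (T i) /\ \int[P]_v T i v = 0.
  have [si0|sipos] := eqVneq (s i) 0%R.
    have T0 : T i = cst 0 by apply: funext => v; rewrite /T /p si0 mul0r mul0e.
    by rewrite T0; split; [exact: integrable0 | exact: integral0].
  have spi : (0 < s i)%R by rewrite lt_neqAle eq_sym sipos s0.
  have hXi := Xint i spi.
  have hci : P.-integrable setT (fun _ => (c i)%:E).
    exact: (@finite_measure_integrable_cst _ _ _ P setT (c i) measurableT).
  have hB : P.-integrable setT (X i \- (fun _ => (c i)%:E)) by exact: integrableB.
  split; first exact: integrableZl.
  rewrite /T integralZl //.
  rewrite (integralB measurableT hXi hci) -xiE.
  have [_ [-> _]] := sp i spi.
  by rewrite intcst subee // mule0.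
pose Z := fun v => (ln S)%:E + \sum_(i < N) T i v.
have ZE : \int[P]_v Z v = (ln S)%:E.
  have hc : P.-integrable setT (fun _ => (ln S)%:E).
    exact: (@finite_measure_integrable_cst _ _ _ P setT (ln S) measurableT).
  have hsum : P.-integrable setT (fun v => \sum_(i < N) T i v).
    apply: integrable_sum => // k _; exact: (Tint k).1.
  rewrite /Z (@integralD _ _ R P setT measurableT _ _ hc hsum).
  rewrite intcst (@integral_sum _ _ R P setT measurableT _ T (fun k => (Tint k).1)).
  by rewrite big1 ?adde0 // => k _; exact: (Tint k).2.
have mZ : measurable_fun setT Z.
  apply: emeasurable_funD; first exact: measurable_cst.
  by apply: emeasurable_sum => k; exact: measurable_int (Tint k).1.
rewrite -ZE; apply: le_integral_gen => // v.
have [[j [sj pj]]|hall] := pselect (exists j, (0 < s j)%R /\ (Psi (tnth v j) <= 0)%R).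
  suff -> : Z v = -oo by exact: leNye.
  rewrite /Z; suff -> : \sum_(i < N) T i v = -oo by rewrite addeNy.
  apply/esum_eqNyP; exists j; split; [by rewrite mem_index_enum | by [] | ].
  rewrite /T /X /G le0_lneNy ?lee_fin // addNye.
  by rewrite gt0_muleNy // lte_fin; exact: divr_gt0.
have hpos i : (0 < s i)%R -> (0 < Psi (tnth v i))%R.
  by move=> si; rewrite ltNge; apply/negP => h; apply: hall; exists i.
have Tv i : T i v = ((p i) * (ln (Psi (tnth v i)) - c i))%:E.
  have [si0|sipos] := eqVneq (s i) 0%R.
    by rewrite /T /p si0 !mul0r mul0e.
  have spi : (0 < s i)%R by rewrite lt_neqAle eq_sym sipos s0.
  by rewrite /T /X /G lne_EFin ?hpos.
have [j sj] : exists j, (0 < s j)%R.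
  case: (pselect (exists j, (0 < s j)%R)) => // hn; exfalso.
  have : S = 0%R.
    rewrite /S big1 // => k _; apply/eqP; rewrite eq_le s0 andbT leNgt.
    by apply/negP => h; apply: hn; exists k.
  by move=> S0; rewrite S0 ltxx in Spos.
have Yge : (w j * Psi (tnth v j) <= Y v)%R.
  rewrite /Y (bigD1 j) //= lerDl; apply: sumr_ge0 => k _.
  exact: mulr_ge0.
have Ypos : (0 < Y v)%R.
  apply: lt_le_trans Yge; apply: mulr_gt0; first exact: (sp j sj).1.
  exact: hpos.
rewrite /Z /L lne_EFin //.
under eq_bigr do rewrite Tv.
rewrite sumEFin -EFinD lee_fin.
apply: (@key_real R _ s w (fun i => Psi (tnth v i)) c S (Y v)) => //.
- by move=> i si; have [_ [_ ->]] := sp i si; split => //; exact: hpos.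
Qed.
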